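(* Let $L$ be a finite self-dual lattice and let $W_1,W_2\subseteq L$ both contain all join-irreducible elements of $L$. Then the induced subgraphs $\nabla_L^{W_1}$ and $\nabla_L^{W_2}$ of the duality graph $\nabla_L$ are isomorphic if and only if there exists $\sigma\in\mathrm{Aut}(L)$ with $\sigma(W_1)=W_2$.
   Context: A self-dual lattice is a lattice $L$ with a map $a\mapsto a^\perp$ of $L$ to itself that is involutive and order-reversing. $\mathrm{Aut}(L)$ is the group of lattice automorphisms $\sigma$ of $L$ satisfying $\sigma(a^\perp)=\sigma(a)^\perp$ for all $a$. The duality graph $\nabla_L$ has vertex set $L$, with $a,b$ adjacent iff $a\le b^\perp$ (loops allowed); $\nabla_L^W$ is its induced subgraph on $W$ (vertex set $W$, inherited adjacency). An element $a$ is (completely) join-irreducible if $a=\bigvee A$ for a subset $A\subseteq L$ implies $a\in A$. *)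

(* Defs.v *)
From HB Require Import structures.
From mathcomp Require Import all_boot all_order.
Set Implicit Arguments. Unset Strict Implicit. Unset Printing Implicit Defensive.
Import Order.TTheory.
Local Open Scope order_scope.

(* A finite (nonempty) lattice is a finTBLatticeType; a self-dual lattice is
   such a lattice with a map perp that is involutive and order-reversing. *)
Definition self_dual_map (d : Order.disp_t) (T : finTBLatticeType d)
    (perp : T -> T) : Prop :=
  involutive perp /\ (forall a b : T, a <= b -> perp b <= perp a).

Definition is_aut (d : Order.disp_t) (T : finTBLatticeType d)
    (perp : T -> T) (s : T -> T) : Prop :=
  bijective s /\
  (forall a b : T, s (a `|` b) = s a `|` s b) /\
  (forall a b : T, s (a `&` b) = s a `&` s b) /\
  (forall a : T, s (perp a) = perp (s a)).

Definition join_irreducible (d : Order.disp_t) (T : finTBLatticeType d)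
    (a : T) : Prop :=
  forall A : {set T}, a = \join_(x in A) x -> a \in A.

Definition dual_adj (d : Order.disp_t) (T : finTBLatticeType d)
    (perp : T -> T) (a b : T) : bool := a <= perp b.

Definition induced_iso (d : Order.disp_t) (T : finTBLatticeType d)
    (perp : T -> T) (W1 W2 : {set T}) : Prop :=
  exists f : T -> T,
    {in W1 &, injective f} /\ f @: W1 = W2 /\
    {in W1 &, forall a b, dual_adj perp a b = dual_adj perp (f a) (f b)}.

(* Main.v *)
Require Import Defs.
From HB Require Import structures.
From mathcomp Require Import all_boot all_order.
From Stdlib Require Import Classical.
Set Implicit Arguments. Unset Strict Implicit. Unset Printing Implicit Defensive.
Import Order.TTheory.
Local Open Scope order_scope.

Section Aux.
Variables (d : Order.disp_t) (T : finTBLatticeType d) (perp : T -> T).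
Hypothesis Hp : self_dual_map perp.

Lemma perpK : involutive perp. Proof. by case: Hp. Qed.
Lemma perp_le a b : (perp a <= perp b) = (b <= a).
Proof.
case: Hp => K M; apply/idP/idP => [h|]; last exact: M.
by rewrite -(K a) -(K b); apply: M.
Qed.
Lemma adj_sym a b : (a <= perp b) = (b <= perp a).
Proof. by rewrite -perp_le perpK. Qed.

Lemma F1 (W : {set T}) (HW : forall a, join_irreducible a -> a \in W) x :
  x = \join_(a | (a \in W) && (a <= x)) a.
Proof.
apply: le_anti; apply/andP; split; last by apply/joinsP => a /andP[_ ->].
have [n] := ubnP #|[set z : T | z < x]|; elim: n x => [//|n IH x Hn].
case: (boolP (x \in W)) => xW.
  by apply: (@joins_sup _ _ _ x) => /=; rewrite xW lexx.
have nJ : ~ join_irreducible x by move/HW; rewrite (negbTE xW).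
have [A] := not_all_ex_not _ _ nJ.
move=> HA; have [eA xA] := imply_to_and _ _ HA.
rewrite {1}eA; apply/joinsP => a aA.
have ax : a <= x by rewrite eA; apply: (@joins_sup _ _ _ a).
have altx : a < x by rewrite lt_neqAle ax andbT; apply/eqP => e; apply: xA; rewrite -e.
have Hsub : #|[set z : T | z < a]| < n.
  apply: (@leq_trans #|[set z : T | z < x]|); last by rewrite -ltnS.
  apply: proper_card.
  apply/properP; split.
    by apply/subsetP => z; rewrite !inE => /lt_le_trans; apply.
  by exists a; rewrite !inE ?altx ?ltxx.
apply: le_trans (IH a Hsub) _.
apply/joinsP => c /andP[cW ca].
by apply: (@joins_sup _ _ _ c); rewrite cW (le_trans ca ax).
Qed.

Lemma F3 (W : {set T}) (HW : forall a, join_irreducible a -> a \in W) x z :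
  (forall b, b \in W -> z <= perp b -> x <= perp b) -> x <= z.
Proof.
move=> H; rewrite -perp_le (F1 HW (perp z)).
apply/joinsP => b /andP[bW bz].
by rewrite adj_sym; apply: H => //; rewrite adj_sym.
Qed.

End Aux.

Theorem mainTheorem19 (d : Order.disp_t) (T : finTBLatticeType d)
    (perp : T -> T) (W1 W2 : {set T}) :
  self_dual_map perp ->
  (forall a : T, join_irreducible a -> a \in W1) ->
  (forall a : T, join_irreducible a -> a \in W2) ->
  (induced_iso perp W1 W2 <->
   exists s : T -> T, is_aut perp s /\ s @: W1 = W2).
Proof.
move=> Hp H1 H2; split.
- case=> f [finj [fW adj]].
  have fW2 b : b \in W1 -> f b \in W2 by move=> bW; rewrite -fW; apply: imset_f.
  have fmono a c : a \in W1 -> c \in W1 -> a <= c -> f a <= f c.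
    move=> aW cW ac; apply: (F3 Hp H2) => b' bW.
    have := bW; rewrite -fW => /imsetP[b bW1 ->].
    rewrite /dual_adj in adj.
    rewrite -adj // -(adj a b) //; exact: le_trans.
  pose s x := \join_(a | (a \in W1) && (a <= x)) f a.
  have sf a : a \in W1 -> s a = f a.
    move=> aW; apply: le_anti; apply/andP; split.
      by apply/joinsP => c /andP[cW ca]; apply: fmono.
    by apply: (@joins_sup _ _ _ a); rewrite aW lexx.
  have smono x y : x <= y -> s x <= s y.
    move=> xy; apply/joinsP => a /andP[aW ax].
    by apply: (@joins_sup _ _ _ a); rewrite aW (le_trans ax xy).
  have K x b : b \in W1 -> (s x <= perp (f b)) = (x <= perp b).
    move=> bW; apply/idP/idP.
      move/joinsP => h; rewrite [X in X <= _](F1 H1 x); apply/joinsP => a /andP[aW ax].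
      have := h a; rewrite aW ax => /(_ isT).
      by have := adj a b aW bW; rewrite /dual_adj => ->.
    move=> xb; apply/joinsP => a /andP[aW ax].
    by rewrite /dual_adj in adj; rewrite -adj //; apply: le_trans ax xb.
  have srefl x y : s x <= s y -> x <= y.
    move=> sxy; apply: (F3 Hp H1) => b bW yb.
    by rewrite -K //; apply: le_trans sxy _; rewrite K.
  have sinj : injective s.
    by move=> x y e; apply: le_anti; apply/andP; split; apply: srefl; rewrite e.
  have [g sg gs] := injF_bij sinj.
  have sle x y : (s x <= s y) = (x <= y).
    by apply/idP/idP; [apply: srefl | apply: smono].
  clearbody s; exists s; split; last first.
    rewrite -fW; apply: eq_in_imset => a aW; exact: sf.
  split; first by exists g.
  split.
    move=> a b; have ec := gs (s a `|` s b); move: (g _) ec => c ec.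
    rewrite -ec; apply: le_anti; apply/andP; split.
      by rewrite sle leUx -(sle a) -(sle b) ec leUl leUr.
    by rewrite ec leUx !sle leUl leUr.
  split.
    move=> a b; have ec := gs (s a `&` s b); move: (g _) ec => c ec.
    rewrite -ec; apply: le_anti; apply/andP; split.
      by rewrite ec lexI !sle leIl leIr.
    by rewrite sle lexI -(sle c a) -(sle c b) ec leIl leIr.
  move=> x; apply: le_anti; apply/andP; split; apply: (F3 Hp H2) => b';
    rewrite -fW => /imsetP[b bW ->].
    by rewrite K // !(perp_le Hp) -sf // sle.
  by rewrite K // !(perp_le Hp) -sf // sle.
- case=> s [[[g sg gs] [sU [sI sp]]] sW].
  have smono x y : x <= y -> s x <= s y.
    by move=> /join_idPr xy; apply/join_idPr; rewrite -sU xy.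
  have sle x y : (s x <= s y) = (x <= y).
    apply/idP/idP; last exact: smono.
    by move=> /join_idPr; rewrite -sU => /(can_inj sg) /join_idPr.
  exists s; split; first by move=> x y _ _; apply: (can_inj sg).
  split => // a b _ _; by rewrite /dual_adj -sp sle.
Qed.
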